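(* For integers $n\ge2$, $0<k<n$ and $0<i\le n$, the number of directed paths in $\Gamma$ from $(i,0)$ to $(n,k)$ is $$\pi(n,k,i)=\sum_{s=0}^{\min\{k,\,n-i\}}\binom{k}{s}\binom{n-k}{n-i-s}\,\pi(n-i,s,0).$$
   Context: Let $\Gamma$ be the directed graph whose nodes are the pairs $(n,k)$ of integers with $n\ge k\ge 0$, and whose edges are, for all $n\ge k\ge 0$: $(n+1,k)\to(n+1,k+1)$ and $(n,n-k)\to(n+1,k+1)$. $\pi(n,k,i)$ denotes the number of directed paths in $\Gamma$ from $(i,0)$ to $(n,k)$, where the trivial path counts when $(i,0)=(n,k)$ (so $\pi(0,0,0)=1$, and $\pi(m,0,0)=0$ for $m\ge1$). *)

(* Defs.v *)
From HB Require Import structures.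
From mathcomp Require Import all_boot finmap.
From mathcomp Require Import boolp classical_sets cardinality.

Set Implicit Arguments.
Unset Strict Implicit.
Unset Printing Implicit Defensive.

Local Open Scope classical_set_scope.

(* Nodes of Gamma are pairs (n,k) with n >= k >= 0. *)
Definition node := (nat * nat)%type.

Definition edge (a b : node) : Prop :=
  exists n k, (k <= n)%N /\
    ((a = (n.+1, k) /\ b = (n.+1, k.+1)) \/ (a = (n, n - k) /\ b = (n.+1, k.+1))).

(* A directed path from u to v: the vertex sequence u :: p, with consecutive
   vertices joined by edges and last vertex v.  p = [::] is the trivial path. *)
Definition is_dpath (u v : node) (p : seq node) : Prop :=
  last u p = v /\
  forall j, (j < size p)%N -> edge (nth u (u :: p) j) (nth u p j).

(* pi n k i = number of directed paths from (i,0) to (n,k)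
   (the cardinality of the set of such paths; this set is finite). *)
Definition piG (n k i : nat) : nat :=
  #|` fset_set [set p : seq node | is_dpath (i, 0) (n, k) p] |.

(* Main.v *)
Require Import Defs.
From HB Require Import structures.
From mathcomp Require Import all_boot finmap zify.
From mathcomp Require Import boolp classical_sets cardinality.
Set Implicit Arguments. Unset Strict Implicit. Unset Printing Implicit Defensive.
Local Open Scope classical_set_scope.

Definition edgeb (a b : node) : bool :=
  [&& 0 < b.1, 0 < b.2, b.2 <= b.1 &
     (a == (b.1, b.2.-1)) || (a == (b.1.-1, b.1 - b.2))].

Lemma edgeP a b : edge a b <-> edgeb a b.
Proof.
split.
  case=> n [k [kn [[-> ->]|[-> ->]]]]; rewrite /edgeb /= ltnS kn /=.
    by rewrite eqxx.
  by rewrite subSS eqxx orbT.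
case: a b => a1 a2 [b1 b2]; rewrite /edgeb /=.
case: b1 => // b1; case: b2 => // b2 /= /andP[kn /orP[]] /eqP [-> ->].
  by exists b1, b2; split => //; left.
by exists b1, b2; split => //; right; rewrite subSS.
Qed.

Lemma dpathP u v p : is_dpath u v p <-> path edgeb u p /\ last u p = v.
Proof.
split.
  by case=> hl hn; split => //; apply/(pathP u) => j /hn /edgeP.
by case=> /(pathP u) hp hl; split => // j /hp /edgeP.
Qed.

Section Paths.
Variable i : nat.

Fixpoint paths (m : nat) : nat -> seq (seq node) :=
  fix inner j := match j with
   | 0 => if m == i then [:: [::]] else [::]
   | j'.+1 => if j'.+1 <= m then
        [seq rcons p (m, j'.+1) | p <- inner j'] ++
        match m with 0 => [::] | m'.+1 => [seq rcons p (m, j'.+1) | p <- paths m' (m' - j')] end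
      else [::]
  end.

Lemma paths_sound m j p : p \in paths m j -> path edgeb (i,0) p /\ last (i,0) p = (m,j).
Proof.
elim: m j p => [|m IHm] j p.
  case: j => [|j] /=; last by [].
  by case: eqP => // <-; rewrite inE => /eqP ->.
elim: j p => [|j IHj] p /=.
  by case: eqP => // <-; rewrite inE => /eqP ->.
case: ifP => // jm; rewrite mem_cat => /orP[] /mapP[q qin ->].
  have [hp hl] := IHj _ qin.
  by rewrite rcons_path last_rcons hp hl /edgeb /= jm eqxx.
have [hp hl] := IHm _ _ qin.
by rewrite rcons_path last_rcons hp hl /edgeb /= jm subSS eqxx orbT.
Qed.

Lemma paths0 m : paths m 0 = if m == i then [:: [::]] else [::].
Proof. by case: m. Qed.

Lemma paths_complete p m j : path edgeb (i,0) p -> last (i,0) p = (m,j) -> p \in paths m j.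
Proof.
elim/last_ind: p m j => [|q v IH] m j.
  by move=> _ [<- <-]; rewrite paths0 eqxx inE.
rewrite rcons_path last_rcons => /andP[hq he] hv; subst v.
move: he; rewrite /edgeb /=; case: m => // m; case: j => // j /= /andP[jm /orP[]] /eqP hl.
  rewrite jm mem_cat; apply/orP; left; apply/mapP; exists q => //.
  exact: (IH _ _ hq hl).
rewrite jm mem_cat; apply/orP; right; apply/mapP; exists q => //.
by apply: IH; rewrite // hl subSS.
Qed.

Lemma paths_uniq m j : uniq (paths m j).
Proof.
elim: m j => [|m IHm] j.
  by case: j => [|j] //=; case: eqP.
elim: j => [|j IHj] /=; first by case: eqP.
case: ifP => // jm; rewrite cat_uniq !(map_inj_uniq (@rcons_injl _ _)) IHj IHm /=.
rewrite andbT; apply/hasPn => p /mapP[q qin ->]; apply/negP => /mapP[q2 q2in E]; have E2 : q = q2 by exact: rcons_injl E.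
subst q2. have [_ h1] := paths_sound qin; have [_ h2] := paths_sound (m:=m.+1) (j:=j) q2in.
by move: h1; rewrite h2 => -[] /eqP; rewrite -[m.+1]addn1 -{2}(addn0 m) eqn_add2l.
Qed.

Lemma piG_size m j : piG m j i = size (paths m j).
Proof.
rewrite /piG.
have -> : [set p | is_dpath (i, 0) (m, j) p] = [set` [fset x in paths m j]%fset].
  apply/seteqP; split => p /=; rewrite inE.
    by case/dpathP => h1 h2; exact: paths_complete.
  by move/paths_sound => [h1 h2]; apply/dpathP.
by rewrite set_fsetK card_fseq undup_id // paths_uniq.
Qed.

End Paths.
Lemma piG_rec m j i : j <= m -> piG m.+1 j.+1 i = piG m.+1 j i + piG m (m - j) i.
Proof.
move=> jm; rewrite !piG_size /= ltnS jm size_cat !size_map.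
by case: j jm.
Qed.

Lemma piG0 m i : piG m 0 i = (m == i).
Proof. by rewrite piG_size paths0; case: eqP. Qed.

Lemma piG_low m j i : m < i -> piG m j i = 0.
Proof.
rewrite piG_size; elim: m j => [|m IHm] j.
  by case: j => [|j] //= i0; case: eqP => // e; rewrite -e in i0.
move=> mi; elim: j => [|j IHj] /=.
  by case: eqP => // e; rewrite e ltnn in mi.
case: ifP => // _; rewrite size_cat !size_map IHj // IHm //.
exact: ltnW.
Qed.

Lemma L1 k e (Y : nat -> nat) :
  \sum_(0 <= a < e.+2) 'C(k.+1, a) * Y a =
  \sum_(0 <= a < e.+2) 'C(k, a) * Y a + \sum_(0 <= a < e.+1) 'C(k, a) * Y a.+1.
Proof.
rewrite !big_nat_recl // !bin0.
under eq_bigr do rewrite binS mulnDl.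
rewrite big_split /=; rewrite binS bin0; lia.
Qed.

Lemma L2 r e (X Z : nat -> nat) :
  \sum_(0 <= a < e.+2) X a * 'C(r.+1, e.+1 - a) * Z a =
  \sum_(0 <= a < e.+2) X a * 'C(r, e.+1 - a) * Z a +
  \sum_(0 <= a < e.+1) X a * 'C(r, e - a) * Z a.
Proof.
rewrite big_nat_recr // [X in _ = X + _]big_nat_recr //= subnn !bin0.
rewrite (@eq_big_nat _ _ _ 0 e.+1 _ (fun a => X a * 'C(r, e.+1 - a) * Z a + X a * 'C(r, e - a) * Z a)).
  rewrite big_split /=; lia.
move=> a /andP[_ ae]; rewrite subSn // binS; lia.
Qed.

Definition h e a := piG e a 0.

Lemma hrec e a : a <= e -> h e.+1 a.+1 = h e.+1 a + h e (e - a).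
Proof. exact: piG_rec. Qed.

Lemma ident k r e :
  \sum_(0 <= a < e.+2) 'C(k.+1, a) * 'C(r, e.+1 - a) * h e.+1 a =
  \sum_(0 <= a < e.+2) 'C(k, a) * 'C(r.+1, e.+1 - a) * h e.+1 a +
  \sum_(0 <= a < e.+1) 'C(r, a) * 'C(k, e - a) * h e a.
Proof.
under eq_bigr do rewrite -mulnA.
rewrite L1 L2.
under [X in _ = X + _ + _]eq_bigr do rewrite -mulnA.
rewrite -addnA; congr (_ + _).
rewrite (@eq_big_nat _ _ _ 0 e.+1 _ (fun a => 'C(k, a) * 'C(r, e - a) * h e.+1 a +
   'C(k, a) * 'C(r, e - a) * h e (e - a))); last first.
  by move=> a /andP[_ ae]; rewrite subSS hrec // mulnA mulnDr.
rewrite big_split /=; congr (_ + _).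
rewrite big_nat_rev /=; apply: eq_big_nat => a /andP[_ ae].
rewrite add0n subSS subKn //; lia.
Qed.

Definition Gd d n k := \sum_(0 <= a < d.+1) 'C(k, a) * 'C(n - k, d - a) * h d a.

Lemma mainlem i d k : k <= i + d -> piG (i + d) k i = Gd d (i + d) k.
Proof.
elim: d k => [|d IHd] k.
  rewrite addn0 /Gd big_nat1 !bin0 /h piG0 /= => ki.
  elim: k ki => [|k IHk] ki; first by rewrite piG0 eqxx.
  case: i ki IHk => // i ki IHk.
  by rewrite piG_rec // IHk 1?ltnW // piG_low.
rewrite addnS; elim: k => [|k IHk] kn.
  rewrite piG0 /Gd big_nat_recl // /h piG0 /= muln0 big1 => [|a _].
    by apply/eqP; rewrite eqb0 neq_ltn ltnS leq_addr orbT.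
  by rewrite bin0n.
rewrite piG_rec // IHk 1?ltnW // IHd // 1?leq_subr //.
rewrite /Gd subSS (ident k (i + d - k) d) subSn // subKn //.
Qed.

Theorem proposition4 (n k i : nat) :
  (2 <= n)%N -> (0 < k < n)%N -> (0 < i <= n)%N ->
  piG n k i =
  (\sum_(0 <= s < (minn k (n - i)).+1)
      'C(k, s) * 'C(n - k, n - i - s) * piG (n - i) s 0)%N.
Proof.
move=> _ /andP[_ kn] /andP[_ inn].
have E : n = i + (n - i) by rewrite subnKC.
rewrite [in LHS]E mainlem; last by rewrite -E ltnW.
rewrite -E.
rewrite /Gd /h; case: (leqP k (n - i)) => kd //.
rewrite (big_cat_nat _ (n := k.+1)) //=.
rewrite [X in _ + X]big_nat_cond [X in _ + X]big1 ?addn0 // => a /andP[/andP[ka _] _].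
by rewrite bin_small.
Qed.
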